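(* If there exists an $h\times h$ real Hadamard matrix with $h\equiv 1$ or $2\pmod 3$, then there exists an equiangular tight frame of $N$ vectors in $\mathbb{R}^M$ with \[ M=\tfrac{1}{3}(h+1)(2h+1),\qquad N=h(2h+1). \]
   Context: A real Hadamard matrix of size $h$ is an $h\times h$ matrix $\mathbf{H}$ with entries in $\{\pm1\}$ such that $\mathbf{H}\mathbf{H}^{T}=h\mathbf{I}$. An equiangular tight frame (ETF) of $N$ vectors in $\mathbb{R}^M$ is a sequence $\{\phi_i\}_{i=1}^N$ of nonzero vectors of equal norm such that $|\langle\phi_i,\phi_j\rangle|$ is the same for all $i\neq j$ and $\sum_i\phi_i\phi_i^{T}$ is a scalar multiple of the identity on $\mathbb{R}^M$. *)

(* Defs.v *)
From HB Require Import structures.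
From mathcomp Require Import all_boot all_order all_algebra.
From mathcomp Require Import reals.
Set Implicit Arguments. Unset Strict Implicit. Unset Printing Implicit Defensive.
Import Order.TTheory GRing.Theory Num.Theory.
Local Open Scope ring_scope.

Definition is_hadamard (R : realType) (h : nat) (H : 'M[R]_h) : Prop :=
  (forall i j, H i j = 1 \/ H i j = -1) /\ H *m H^T = (h%:R)%:M.

Definition dotv (R : realType) (M : nat) (u v : 'cV[R]_M) : R :=
  (u^T *m v) 0 0.

Definition is_ETF (R : realType) (M N : nat) (phi : 'I_N -> 'cV[R]_M) : Prop :=
  [/\ (forall i, phi i != 0),
      (forall i j, dotv (phi i) (phi i) = dotv (phi j) (phi j)),
      (forall i j k l, i != j -> k != l ->
         `|dotv (phi i) (phi j)| = `|dotv (phi k) (phi l)|) &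
      (exists c : R, \sum_(i < N) phi i *m (phi i)^T = c%:M)].

(* Main.v *)
Require Import Defs.
From HB Require Import structures.
From mathcomp Require Import all_boot all_order all_algebra.
From mathcomp Require Import reals.
From mathcomp Require Import zify ring lra.
From Stdlib Require Import Lia.
Set Implicit Arguments. Unset Strict Implicit. Unset Printing Implicit Defensive.
Import Order.TTheory GRing.Theory Num.Theory.
Lemma sumb_card (T : finType) (Q A : pred T) :
  (\sum_(x | Q x) (A x : nat) = #|[set x | Q x && A x]|)%N.
Proof.
rewrite -sum1dep_card [RHS]big_mkcond [LHS]big_mkcond /=.
by apply: eq_bigr => x _; case: (Q x); case: (A x).
Qed.

Lemma card_setb (T : finType) (A : {set T}) (Q : pred T) :
  #|[set x in A | Q x]| = (\sum_(x in A) (Q x : nat))%N.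
Proof. by rewrite sumb_card. Qed.

Section Count.
Variables (P : finType) (bl : {set {set P}}).
Hypothesis Hsz : forall B, B \in bl -> (#|B| <= 3)%N.
Hypothesis Hcov : forall p q, p != q -> exists2 B, B \in bl & (p \in B) && (q \in B).
Hypothesis Hnb : (6 * #|bl| <= #|P| * (#|P|).-1)%N.

Let c p q := #|[set B in bl | (p \in B) && (q \in B)]|.

Lemma inner_cnt (p : P) (B : {set P}) : (\sum_(q | q != p) ((p \in B) && (q \in B) : nat))%N
   = ((p \in B) * (#|B|).-1)%N.
Proof.
case pB: (p \in B); last by rewrite big1 //.
rewrite mul1n sumb_card (cardsD1 p B) pB add1n /=.
by apply: eq_card => q; rewrite !inE andbC.
Qed.

Lemma pair_cnt (B : {set P}) : (\sum_p \sum_(q | q != p) ((p \in B) && (q \in B) : nat))%N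
   = (#|B| * (#|B|).-1)%N.
Proof.
under eq_bigr => p _ do rewrite inner_cnt.
rewrite -big_distrl /=; congr (_ * _).
rewrite (sumb_card xpredT (mem B)); by apply: eq_card => x; rewrite !inE.
Qed.

Lemma tot_cnt : (\sum_p \sum_(q | q != p) c p q)%N = (\sum_(B in bl) #|B| * (#|B|).-1)%N.
Proof.
rewrite /c.
under eq_bigr => p _ do under eq_bigr => q _ do rewrite card_setb.
under eq_bigr => p _ do rewrite exchange_big /=.
rewrite exchange_big /=.
by apply: eq_bigr => B _; rewrite pair_cnt.
Qed.

Lemma c_ge1 p q : p != q -> (1 <= c p q)%N.
Proof.
move=> /Hcov [B Bb pqB]; rewrite /c card_gt0; apply/set0Pn; exists B.
by rewrite inE Bb.
Qed.

Lemma cnt_eq : (\sum_p \sum_(q | q != p) c p q)%N = (#|P| * (#|P|).-1)%N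
   /\ (\sum_(B in bl) #|B| * (#|B|).-1)%N = (6 * #|bl|)%N.
Proof.
have L1 : (#|P| * (#|P|).-1 <= \sum_p \sum_(q | q != p) c p q)%N.
  rewrite -sum_nat_const; apply: leq_sum => p _.
  rewrite -(cardC1 p) -sum1_card; apply: leq_sum => q qp; apply: c_ge1.
  by rewrite eq_sym; move: qp; rewrite !inE.
have L2 : (\sum_(B in bl) #|B| * (#|B|).-1 <= 6 * #|bl|)%N.
  rewrite mulnC -sum_nat_const; apply: leq_sum => B /Hsz.
  by case: #|B| => [|[|[|[|]]]].
rewrite -tot_cnt; split; apply/eqP; rewrite eqn_leq.
  rewrite L1 andbT; apply: leq_trans Hnb; rewrite tot_cnt.
  exact: leq_trans L2 _.
rewrite tot_cnt L2 /=; rewrite -tot_cnt; apply: leq_trans L1.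
exact: leq_trans _ Hnb.
Qed.

Lemma sts_c1 p q : p != q -> c p q = 1%N.
Proof.
have [E1 _] := cnt_eq.
have H := @leqif_sum P xpredT (fun p => [forall (q | q != p), 1%N == c p q])
   (fun p => \sum_(q | q != p) 1)%N (fun p => \sum_(q | q != p) c p q)%N.
have /H {H}[_] : forall p, xpredT p -> (\sum_(q | q != p) 1 <= \sum_(q | q != p) c p q ?= iff
        [forall (q | q != p), 1%N == c p q])%N.
  move=> p0 _; apply: leqif_sum => q0 qp; split; first by apply: c_ge1; rewrite eq_sym.
  by [].
rewrite E1.
have -> : (\sum_(i : P) \sum_(q | q != i) 1 = #|P| * (#|P|).-1)%N.
  rewrite -sum_nat_const; apply: eq_bigr => p0 _.
  by rewrite sum1dep_card -(cardC1 p0); apply: eq_card => x; rewrite !inE.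
rewrite eqxx => /esym/forallP/(_ p)/forallP/(_ q).
by move=> /implyP Hq pq; apply/esym/eqP; apply: Hq; rewrite eq_sym.
Qed.

Lemma sts_sz3 B : B \in bl -> #|B| = 3%N.
Proof.
have [_ E2] := cnt_eq.
have H := @leqif_sum {set P} (mem bl) (fun B => #|B| * (#|B|).-1 == 6)%N
   (fun B => #|B| * (#|B|).-1)%N (fun _ => 6%N).
have /H {H}[_] : forall B, B \in bl -> (#|B| * (#|B|).-1 <= 6 ?= iff (#|B| * (#|B|).-1 == 6))%N.
  move=> B0 /Hsz HB; split; last by [].
  by move: HB; case: #|B0| => [|[|[|[|]]]].
rewrite E2 sum_nat_const mulnC eqxx => /esym/forallP/(_ B)/implyP H Bb.
move: (H Bb) (Hsz Bb); by case: #|B| => [|[|[|[|]]]].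
Qed.

Lemma sts_r p : (#|[set B in bl | p \in B]|).*2 = (#|P|).-1.
Proof.
have E : (\sum_(q | q != p) c p q)%N = (#|P|).-1.
  rewrite -(cardC1 p) -sum1_card; apply: eq_big => [q|q qp]; first by rewrite !inE.
  by apply: sts_c1; rewrite eq_sym.
rewrite -E /c.
under eq_bigr => q _ do rewrite card_setb.
rewrite exchange_big /=.
under eq_bigr => B _ do rewrite inner_cnt.
rewrite card_setb -muln2 big_distrl /=; apply: eq_bigr => B Bb.
by rewrite (sts_sz3 Bb); case: (p \in B).
Qed.

Lemma sts_nb : (6 * #|bl| = #|P| * (#|P|).-1)%N.
Proof.
have [E1 E2] := cnt_eq; rewrite -E2 -E1 tot_cnt //.
Qed.

End Count.
Definition STS_ok (P : finType) (bl : {set {set P}}) :=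
  [/\ (forall B, B \in bl -> (#|B| <= 3)%N),
      (forall p q, p != q -> exists2 B, B \in bl & (p \in B) && (q \in B)) &
      (6 * #|bl| <= #|P| * (#|P|).-1)%N].

Lemma s3 (i j : 'I_3) : i != j -> j = (i + 1)%R \/ i = (j + 1)%R.
Proof.
case: i => [[|[|[|//]]]] Hi; case: j => [[|[|[|//]]]] Hj //= _;
 first [left; exact/val_inj | right; exact/val_inj].
Qed.

Lemma sts_sym (P : finType) (bl : {set {set P}}) (a b : P) :
  (exists2 B, B \in bl & (a \in B) && (b \in B)) ->
  (exists2 B, B \in bl & (b \in B) && (a \in B)).
Proof. by case=> B Bb H; exists B => //; rewrite andbC. Qed.

Lemma card_imset_le3 (T U : finType) (f : T -> U) : #|T| = 3%N -> (#|[set f x | x : T]| <= 3)%N.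
Proof. move=> <-; exact: leq_imset_card. Qed.

Lemma card3_le (T : finType) (a b c : T) : (#|[set a; b; c]| <= 3)%N.
Proof.
apply: leq_trans (leq_card_setU _ _) _; rewrite cards1 addn1 ltnS.
by rewrite cards2; case: (a != b).
Qed.

Lemma sum_set2 (n : nat) (x z : 'I_n) : x != z ->
  (\sum_(w in [set x; z]) (w : nat) = x + z)%N.
Proof. by move=> xz; rewrite big_setU1 /= ?big_set1 // inE. Qed.

Section Bose.
Variable n : nat.
Let m := n.*2.+1.
Let P := ('I_m * 'I_3)%type.
Definition bqf (S : {set 'I_m}) : 'I_m :=
  inord (((\sum_(x in S) (x : nat)) * n.+1) %% m).
Definition bblk1 (x : 'I_m) : {set P} := [set (x, i) | i : 'I_3].
Definition bblk3 (S : {set 'I_m}) (i : 'I_3) : {set P} :=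
  [set (x, i) | x in S] :|: [set (bqf S, (i + 1)%R)].
Definition bdraws := [set S : {set 'I_m} | #|S| == 2%N].
Definition bbl : {set {set P}} :=
  [set bblk1 x | x : 'I_m] :|: [set bblk3 z.1 z.2 | z in setX bdraws [set: 'I_3]].

Lemma barithA w : (w < m)%N -> ((w + w) * n.+1 %% m = w)%N.
Proof.
move=> wm; have -> : ((w + w) * n.+1 = w * m + w)%N by rewrite /m; nia.
by rewrite modnMDl modn_small.
Qed.

Lemma barithB x y : (x < m)%N -> (y < m)%N ->
  ((x + (y.*2 + (m - x)) %% m) * n.+1 %% m = y)%N.
Proof.
move=> xm ym; rewrite -modnMml modnDmr.
have -> : (x + (y.*2 + (m - x)) = y.*2 + m)%N by rewrite addnCA subnKC // ltnW.
rewrite modnDr modnMml.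
have -> : (y.*2 * n.+1 = y * m + y)%N by rewrite /m; nia.
by rewrite modnMDl modn_small.
Qed.

Lemma bkey (x y : 'I_m) (i : 'I_3) : x != y ->
  exists2 B, B \in bbl & ((x, i) \in B) && ((y, (i + 1)%R) \in B).
Proof.
move=> xy.
pose z : 'I_m := inord ((y.*2 + (m - x)) %% m).
have zv : (z : nat) = ((y.*2 + (m - x)) %% m)%N by rewrite inordK // ltn_pmod.
have Hz : ((x + z) * n.+1 %% m = y)%N by rewrite zv barithB.
have xz : x != z.
  apply: contra xy => /eqP xz; apply/eqP/val_inj => /=.
  by rewrite -Hz -xz barithA.
exists (bblk3 [set x; z] i).
  rewrite inE; apply/orP; right; apply/imsetP; exists ([set x; z], i) => //.
  by rewrite !inE cards2 xz.
have qf : bqf [set x; z] = y.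
  by rewrite /bqf sum_set2 // Hz inord_val.
rewrite /bblk3 qf !inE; apply/andP; split; apply/orP; [left|right].
  by apply/imsetP; exists x; rewrite ?inE ?eqxx.
by [].
Qed.

Lemma bose_ok : STS_ok bbl.
Proof.
split.
- move=> B; rewrite inE => /orP[/imsetP[x _ ->]|/imsetP[[S i] /setXP[]]].
    by apply: card_imset_le3; rewrite card_ord.
  rewrite inE => /eqP S2 _ ->; apply: leq_trans (leq_card_setU _ _) _.
  by rewrite cards1 addn1 ltnS; apply: leq_trans (leq_imset_card _ _) _; rewrite S2.
- move=> [x i] [y j] pq.
  have [exy|nxy] := eqVneq x y.
    subst y; exists (bblk1 x); first by rewrite inE; apply/orP; left; exact: imset_f.
    by apply/andP; split; apply/imsetP; [exists i | exists j].
  have [eij|nij] := eqVneq i j.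
    subst j; exists (bblk3 [set x; y] i).
      rewrite inE; apply/orP; right; apply/imsetP; exists ([set x; y], i) => //.
      by rewrite !inE cards2 nxy.
    by rewrite /bblk3 !inE; apply/andP; split; apply/orP; left; apply/imsetP;
      [exists x | exists y]; rewrite ?inE ?eqxx ?orbT.
  case: (s3 nij) => ->; first exact: bkey.
  by apply: sts_sym; apply: bkey; rewrite eq_sym.
- apply: (@leq_trans (6 * (m + 'C(m, 2) * 3))).
    rewrite leq_mul2l; apply: leq_trans (leq_card_setU _ _) _; apply: leq_add.
      by apply: leq_trans (leq_imset_card _ _) _; rewrite card_ord.
    apply: leq_trans (leq_imset_card _ _) _.
    by rewrite cardsX cardsT card_ord /bdraws card_draws card_ord.
  rewrite /P card_prod !card_ord bin2.
  have -> : (m * m.-1 = (m * n).*2)%N by rewrite /m /= -doubleMr.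
  rewrite doubleK /m; nia.
Qed.

End Bose.
Section Skolem.
Variable n1 : nat.
Let n := n1.+1.
Let m := (n1.*2).+2.
Lemma m_eq : m = n.*2. Proof. by rewrite /m /n doubleS. Qed.
Let P := option ('I_m * 'I_3).
Definition ssig (s : nat) : nat := if odd s then (n + s./2)%N else s./2.
Definition stau (y : nat) : nat := if (y < n)%N then y.*2 else (y - n).*2.+1.

Lemma ssig_lt s : (s < m)%N -> (ssig s < m)%N.
Proof.
rewrite m_eq /ssig => sm; have := odd_double_half s.
case: (odd s) => /= E; rewrite -!muln2 in E sm *; lia.
Qed.

Lemma stau_lt y : (y < m)%N -> (stau y < m)%N.
Proof. rewrite m_eq /stau => ym; case: (ltnP y n) => H; rewrite -!muln2 in ym *; lia. Qed.

Lemma ssig_tau y : (y < m)%N -> ssig (stau y) = y.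
Proof.
rewrite m_eq /stau /ssig => ym; case: (ltnP y n) => H.
  by rewrite odd_double doubleK.
rewrite /= odd_double /= uphalf_double.
by rewrite subnKC.
Qed.

Lemma ssig_2x x : (x < m)%N -> ssig (x.*2 %% m) = (if (x < n)%N then x else x - n)%N.
Proof.
move=> xm; case: (ltnP x n) => H.
  rewrite modn_small; last by rewrite m_eq ltn_double.
  by rewrite /ssig odd_double doubleK.
have -> : (x.*2 %% m = (x - n).*2)%N.
  have -> : (x.*2 = (x - n).*2 + m)%N by rewrite m_eq -doubleD subnK.
  rewrite modnDr modn_small // m_eq ltn_double; rewrite m_eq in xm.
  rewrite -!muln2 in xm *; lia.
by rewrite /ssig odd_double doubleK.
Qed.

Definition sqf (S : {set 'I_m}) : 'I_m :=
  inord (ssig ((\sum_(x in S) (x : nat)) %% m)).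
Definition sblk1 (x : 'I_n) : {set P} := [set Some (inord x, i) | i : 'I_3].
Definition sblk2 (x : 'I_n) (i : 'I_3) : {set P} :=
  [set None; Some (inord (x + n), i); Some (inord x, (i + 1)%R)].
Definition sblk3 (S : {set 'I_m}) (i : 'I_3) : {set P} :=
  [set Some (x, i) | x in S] :|: [set Some (sqf S, (i + 1)%R)].
Definition sdraws := [set S : {set 'I_m} | #|S| == 2%N].
Definition sbl : {set {set P}} :=
  [set sblk1 x | x : 'I_n] :|: [set sblk2 z.1 z.2 | z : 'I_n * 'I_3]
  :|: [set sblk3 z.1 z.2 | z in setX sdraws [set: 'I_3]].

Lemma sin1 x : sblk1 x \in sbl.
Proof. by rewrite !inE; apply/orP; left; apply/orP; left; exact: imset_f. Qed.
Lemma sin2 x i : sblk2 x i \in sbl.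
Proof. by rewrite !inE; apply/orP; left; apply/orP; right; apply/imsetP; exists (x, i). Qed.
Lemma sin3 (x z : 'I_m) i : x != z -> sblk3 [set x; z] i \in sbl.
Proof.
move=> xz; rewrite inE; apply/orP; right; apply/imsetP; exists ([set x; z], i) => //.
by rewrite !inE cards2 xz.
Qed.

Lemma sarith x a : (x < m)%N -> (a < m)%N -> ((x + (a + (m - x)) %% m) %% m = a)%N.
Proof.
move=> xm am; rewrite modnDmr.
have -> : (x + (a + (m - x)) = a + m)%N by rewrite addnCA subnKC // ltnW.
by rewrite modnDr modn_small.
Qed.

Lemma skey (x y : 'I_m) (i : 'I_3) :
  exists2 B, B \in sbl & (Some (x, i) \in B) && (Some (y, (i + 1)%R) \in B).
Proof.
have [E|NE] := eqVneq (y : nat) (ssig (x.*2 %% m)).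
  rewrite ssig_2x // in E; move: E; case: ltnP => H E.
    exists (sblk1 (Ordinal H)); first exact: sin1.
    have -> : y = x by apply: val_inj.
    by apply/andP; split; apply/imsetP; [exists i | exists (i + 1)%R]; rewrite //= inord_val.
  have xm : (x < n.*2)%N by rewrite -m_eq ltn_ord.
  have yn : (y < n)%N by rewrite E; rewrite -!muln2 in xm; lia.
  exists (sblk2 (Ordinal yn) i); first exact: sin2.
  rewrite /sblk2 /=.
  have -> : (inord (y + n) : 'I_m) = x.
    by apply: val_inj; rewrite /= E subnK // inordK // ltn_ord.
  by rewrite inord_val !inE !eqxx ?orbT.
pose z : 'I_m := inord ((stau y + (m - x)) %% m).
have zv : (z : nat) = ((stau y + (m - x)) %% m)%N by rewrite inordK // ltn_pmod.
have Hz : ((x + z) %% m = stau y)%N by rewrite zv sarith // stau_lt.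
have xz : x != z.
  apply: contra NE => /eqP xz; apply/eqP.
  by rewrite -{1}(ssig_tau (ltn_ord y)) -Hz -xz addnn.
exists (sblk3 [set x; z] i); first exact: sin3.
have qf : sqf [set x; z] = y.
  by rewrite /sqf sum_set2 // Hz ssig_tau ?inord_val // ltn_ord.
rewrite /sblk3 qf !inE; apply/andP; split; apply/orP; [left|right] => //.
by apply/imsetP; exists x; rewrite ?inE ?eqxx.
Qed.

Lemma snone (y : 'I_m) (j : 'I_3) :
  exists2 B, B \in sbl & (None \in B) && (Some (y, j) \in B).
Proof.
case: (ltnP y n) => H.
  exists (sblk2 (Ordinal H) (j - 1)%R); first exact: sin2.
  by rewrite /sblk2 /= inord_val subrK !inE !eqxx /= ?orbT.
have ym : (y < n.*2)%N by rewrite -m_eq ltn_ord.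
have xn : (y - n < n)%N by rewrite -!muln2 in ym; lia.
exists (sblk2 (Ordinal xn) j); first exact: sin2.
rewrite /sblk2 /=.
have -> : (inord (y - n + n) : 'I_m) = y.
  by apply: val_inj; rewrite /= subnK // inordK // ltn_ord.
by rewrite !inE !eqxx /= ?orbT.
Qed.

Lemma skolem_ok : STS_ok sbl.
Proof.
split.
- move=> B; rewrite !inE => /orP[/orP[/imsetP[x _ ->]|/imsetP[[x i] _ ->]]|/imsetP[[S i] /setXP[]]].
  + by apply: card_imset_le3; rewrite card_ord.
  + exact: card3_le.
  rewrite inE => /eqP S2 _ ->; apply: leq_trans (leq_card_setU _ _) _.
  by rewrite cards1 addn1 ltnS; apply: leq_trans (leq_imset_card _ _) _; rewrite S2.
- move=> [[x i]|] [[y j]|] //= pq.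
  + have [eij|nij] := eqVneq i j.
      subst j; have nxy : x != y by apply: contra pq => /eqP ->.
      exists (sblk3 [set x; y] i); first exact: sin3.
      by rewrite /sblk3 !inE; apply/andP; split; apply/orP; left; apply/imsetP;
        [exists x | exists y]; rewrite ?inE ?eqxx ?orbT.
    case: (s3 nij) => ->; first exact: skey.
    by apply: sts_sym; apply: skey.
  + by apply: sts_sym; apply: snone.
  + exact: snone.
- apply: (@leq_trans (6 * (n + n * 3 + 'C(m, 2) * 3))).
    rewrite leq_mul2l; apply: leq_trans (leq_card_setU _ _) _; apply: leq_add.
      apply: leq_trans (leq_card_setU _ _) _; apply: leq_add.
        by apply: leq_trans (leq_imset_card _ _) _; rewrite card_ord.
      by apply: leq_trans (leq_imset_card _ _) _; rewrite card_prod !card_ord.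
    apply: leq_trans (leq_imset_card _ _) _.
    by rewrite cardsX cardsT card_ord /sdraws card_draws card_ord.
  rewrite /P card_option card_prod !card_ord bin2.
  have -> : (m * m.-1 = (n * m.-1).*2)%N by rewrite m_eq -doubleMl.
  rewrite doubleK m_eq -!muln2; nia.
Qed.

End Skolem.
Lemma sts_small : exists (P : finType) (bl : {set {set P}}), #|P| = 1%N /\ STS_ok bl.
Proof.
exists 'I_1, set0; split; first by rewrite card_ord.
split; first by move=> B; rewrite inE.
  by move=> p q; rewrite !ord1.
by rewrite cards0.
Qed.

Lemma sts_exists h : (h %% 3 = 1 \/ h %% 3 = 2)%N ->
  exists (P : finType) (bl : {set {set P}}), #|P| = (h.*2).-1 /\ STS_ok bl.
Proof.
move=> Hh; have E := divn_eq h 3; set t := (h %/ 3)%N in E.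
case: Hh => Hm; rewrite Hm in E.
  case: t E => [|n1] E.
    by rewrite E; exact: sts_small.
  exists (option ('I_(n1.*2).+2 * 'I_3)), (sbl n1); split; last exact: skolem_ok.
  rewrite card_option card_prod !card_ord E -!muln2; lia.
exists ('I_(t.*2).+1 * 'I_3)%type, (bbl t); split; last exact: bose_ok.
rewrite card_prod !card_ord E -!muln2; lia.
Qed.
Local Open Scope ring_scope.

Lemma sum_supp (R : nmodType) (T : finType) (A : {pred T}) (G : T -> R) :
  (forall x, x \notin A -> G x = 0) -> \sum_x G x = \sum_(x in A) G x.
Proof.
move=> HG; rewrite [RHS]big_mkcond; apply: eq_bigr => x _.
by case: ifP => // /negbT /HG.
Qed.

Section Frame.
Variable R : realType.
Variable k : nat.
Local Notation h := k.+1.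
Variable P : finType.
Variable bl : {set {set P}}.
Hypothesis Hsz3 : forall B, B \in bl -> #|B| = 3%N.
Hypothesis Hc1 : forall p q, p != q -> #|[set B in bl | (p \in B) && (q \in B)]| = 1%N.
Hypothesis Hr : forall p, #|[set B in bl | p \in B]| = k.

Definition Bp p := [set B in bl | p \in B].
Definition BpT p := {B : {set P} | B \in Bp p}.
Lemma cardBpT p : #|{: BpT p}| = k.
Proof. by rewrite card_sig -(Hr p); apply: eq_card => B. Qed.

Definition idx p (B : {set P}) : option 'I_k :=
  omap (fun x => cast_ord (cardBpT p) (enum_rank x)) (insub B : option (BpT p)).

Lemma idx_none p B : B \notin Bp p -> idx p B = None.
Proof. by move=> nB; rewrite /idx insubN. Qed.

Lemma idx_some p B : B \in Bp p -> exists a, idx p B = Some a.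
Proof. by move=> iB; rewrite /idx insubT /=; eexists. Qed.

Lemma idx_inj p B B' a : idx p B = Some a -> idx p B' = Some a -> B = B'.
Proof.
rewrite /idx; case: insubP => [x _ <-|] //=; case: insubP => [x' _ <-|] //= [<-] /esym.
by move=> [] /ord_inj /enum_rank_inj ->.
Qed.

Lemma sum_idx p (g : 'I_k -> R) :
  \sum_(B in Bp p) oapp g 0 (idx p B) = \sum_a g a.
Proof.
rewrite big_sub /=.
have -> : \sum_(x : BpT p) oapp g 0 (idx p (val x)) =
          \sum_(x : BpT p) g (cast_ord (cardBpT p) (enum_rank x)).
  by apply: eq_bigr => x _; rewrite /idx valK.
apply/esym; rewrite (reindex (fun x : BpT p => cast_ord (cardBpT p) (enum_rank x))) //.
exists (fun a => enum_val (cast_ord (esym (cardBpT p)) a)) => x _.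
  by rewrite cast_ordK enum_rankK.
by rewrite enum_valK cast_ordKV.
Qed.


Variable H : 'I_h -> 'I_h -> R.
Hypothesis Hpm : forall i j, H i j = 1 \/ H i j = -1.
Hypothesis H0 : forall j, H ord0 j = 1.
Hypothesis Hrow : forall i i', \sum_j H i j * H i' j = (i == i')%:R * h%:R.
Hypothesis Hcol : forall j j', \sum_i H i j * H i j' = (j == j')%:R * h%:R.

Definition F p B j : R := oapp (fun a => H (lift ord0 a) j) 0 (idx p B).

Lemma F_out p B j : B \notin Bp p -> F p B j = 0.
Proof. by move=> nB; rewrite /F idx_none. Qed.

Lemma F_abs p B j : B \in Bp p -> `|F p B j| = 1.
Proof.
move=> /idx_some[a Ha]; rewrite /F Ha /=.
by case: (Hpm (lift ord0 a) j) => ->; rewrite ?normrN normr1.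
Qed.

Lemma Bp_sub p B : B \in Bp p -> B \in bl.
Proof. by rewrite inE => /andP[]. Qed.

Lemma blk_same p j l : \sum_(B in bl) F p B j * F p B l = (j == l)%:R * h%:R - 1.
Proof.
have Z : forall B, B \notin Bp p -> F p B j * F p B l = 0.
  by move=> B nB; rewrite F_out ?mul0r.
rewrite -sum_supp; last first.
  move=> B nB; apply: Z; apply: contra nB; exact: Bp_sub.
rewrite (sum_supp Z).
have -> : \sum_(B in Bp p) F p B j * F p B l =
   \sum_(B in Bp p) oapp (fun a => H (lift ord0 a) j * H (lift ord0 a) l) 0 (idx p B).
  by apply: eq_bigr => B _; rewrite /F; case: (idx p B) => //=; rewrite mul0r.
by rewrite sum_idx -Hcol big_ord_recl !H0 mul1r addrC addKr.
Qed.

Lemma blk_diff p q j l : p != q ->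
  exists2 e : R, `|e| = 1 & \sum_(B in bl) F p B j * F q B l = e.
Proof.
move=> pq; have [B0 HB0] := cards1P (introT eqP (Hc1 pq)).
have B0in : B0 \in [set B in bl | (p \in B) && (q \in B)] by rewrite HB0 set11.
move: (B0in); rewrite inE => /andP[B0bl /andP[pB0 qB0]].
exists (F p B0 j * F q B0 l).
  by rewrite normrM !F_abs ?mulr1 // inE B0bl.
have Z : forall B, B \notin [set B0] -> F p B j * F q B l = 0.
  move=> B; rewrite -HB0 inE negb_and => /orP[nb|/nandP[np|nq]].
  - by rewrite F_out ?mul0r // inE (negbTE nb).
  - by rewrite F_out ?mul0r // inE (negbTE np) andbF.
  - by rewrite [F q B l]F_out ?mulr0 // inE (negbTE nq) andbF.
rewrite -sum_supp; last first.
  by move=> B nB; apply: Z; rewrite -HB0 inE (negbTE nB).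
by rewrite (sum_supp Z) big_set1.
Qed.

Lemma blk_row p B B' : B \in bl -> B' \in bl ->
  \sum_j F p B j * F p B' j = ((p \in B) && (B == B'))%:R * h%:R.
Proof.
move=> Bb B'b.
case pB : (p \in B); last first.
  by rewrite big1 ?mul0r // => j _; rewrite F_out ?mul0r // inE pB andbF.
have /idx_some[a Ha] : B \in Bp p by rewrite inE Bb pB.
case pB' : (p \in B'); last first.
  have -> : (B == B') = false by apply: contraFF pB' => /eqP <-.
  by rewrite big1 ?mul0r // => j _; rewrite [F p B' j]F_out ?mulr0 // inE pB' andbF.
have /idx_some[a' Ha'] : B' \in Bp p by rewrite inE B'b pB'.
rewrite /F Ha Ha' /= Hrow (inj_eq lift_inj).
have [E|naa] := eqVneq a a'; first by rewrite -E in Ha'; rewrite (idx_inj Ha Ha') eqxx.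
case: eqVneq => // EB; move: Ha'; rewrite -EB Ha => -[] /esym /eqP.
by rewrite eq_sym (negbTE naa).
Qed.

Lemma blk_rowsum p B : \sum_j F p B j = 0.
Proof.
case Bp' : (B \in Bp p); last by rewrite big1 // => j _; rewrite F_out ?Bp'.
have /idx_some[a Ha] := Bp'.
rewrite /F Ha /=.
transitivity (\sum_j H (lift ord0 a) j * H ord0 j).
  by apply: eq_bigr => j _; rewrite H0 mulr1.
by rewrite Hrow eq_sym (negbTE (neq_lift _ _)) mul0r.
Qed.


Variable X : P + unit -> ('I_h * bool) -> R.
Hypothesis Xpm : forall r e, X r e = 1 \/ X r e = -1.
Hypothesis Xrow : forall r r', \sum_e X r e * X r' e = (r == r')%:R * (h.*2)%:R.
Hypothesis Xcol : forall e e', \sum_r X r e * X r e' = (e == e')%:R * (h.*2)%:R.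
Variables s2 s3 : R.
Hypothesis s2E : s2 * s2 = 2.
Hypothesis s3E : s3 * s3 = 3.

Definition BT := {B : {set P} | B \in bl}.
Definition Tt := (BT + (P + unit))%type.
Definition Ct := ((P * 'I_h) + ('I_h * bool))%type.
Definition wt (r : P + unit) : R := if r is inr _ then s3 else 1.
Definition phi (c : Ct) (t : Tt) : R :=
  match c, t with
  | inl (p, j), inl B => s2 * F p (val B) j
  | inl (p, j), inr (inl q) => if p == q then 2 else 0
  | inl _, inr (inr _) => 0
  | inr _, inl _ => 0
  | inr e, inr r => X r e * wt r
  end.
Definition dot c c' := \sum_t phi c t * phi c' t.
Definition rsum t t' := \sum_c phi c t * phi c t'.

Lemma sum_unit (G : unit -> R) : \sum_(u : unit) G u = G tt.
Proof. by rewrite (@sum_supp _ _ [set tt]) ?big_set1 // => -[]; rewrite inE. Qed.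

Lemma sum_pair (G : P * 'I_h -> R) : \sum_x G x = \sum_p \sum_j G (p, j).
Proof. by rewrite pair_big; apply: eq_bigr => -[]. Qed.

Lemma sum_1pt (T : finType) (a : T) (G : T -> R) : (forall x, x != a -> G x = 0) ->
  \sum_x G x = G a.
Proof.
by move=> HG; rewrite (@sum_supp _ _ [set a]) ?big_set1 // => x; rewrite inE; apply: HG.
Qed.

Lemma dot_ll p j q l : dot (inl (p, j)) (inl (q, l)) =
  2 * \sum_(B in bl) F p B j * F q B l + (p == q)%:R * 4.
Proof.
rewrite /dot big_sumType /= big_sumType /= sum_unit mulr0 addr0.
congr (_ + _).
  rewrite [RHS]big_distrr [RHS]big_sub /=; apply: eq_bigr => B _.
  by rewrite mulrACA s2E.
rewrite (sum_1pt (a := p)); last by move=> x xp; rewrite eq_sym (negbTE xp) mul0r.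
by rewrite eqxx eq_sym; case: (p == q); rewrite ?mulr0 ?mul1r ?mul0r //; rewrite -natrM.
Qed.

Lemma dot_lr p j e : dot (inl (p, j)) (inr e) = 2 * X (inl p) e.
Proof.
rewrite /dot big_sumType /= big_sumType /= sum_unit mul0r addr0.
rewrite big1 ?add0r; last by move=> B _; rewrite mulr0.
rewrite (sum_1pt (a := p)); last by move=> x xp; rewrite eq_sym (negbTE xp) mul0r.
by rewrite eqxx /wt mulr1.
Qed.

Lemma dot_rr e e' : dot (inr e) (inr e') =
  (e == e')%:R * (h.*2)%:R + 2 * (X (inr tt) e * X (inr tt) e').
Proof.
rewrite /dot big_sumType /= big_sumType /= sum_unit.
rewrite big1 ?add0r; last by move=> B _; rewrite mulr0.
have := Xcol e e'; rewrite big_sumType /= sum_unit => <-.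
rewrite /wt -addrA; congr (_ + _); first by apply: eq_bigr => q _; rewrite !mulr1.
by rewrite mulrACA s3E; ring.
Qed.

Lemma dot_sym c c' : dot c c' = dot c' c.
Proof. by apply: eq_bigr => t _; rewrite mulrC. Qed.

Lemma Xsq r e : X r e * X r e = 1.
Proof. by case: (Xpm r e) => ->; rewrite ?mulrNN mulr1. Qed.

Lemma Xabs r e : `|X r e| = 1.
Proof. by case: (Xpm r e) => ->; rewrite ?normrN normr1. Qed.

Lemma dot_diag c : dot c c = (h.*2 + 2)%:R.
Proof.
case: c => [[p j]|e].
  by rewrite dot_ll blk_same !eqxx -muln2 natrD natrM /=; ring.
by rewrite dot_rr eqxx Xsq mul1r mulr1 natrD.
Qed.

Lemma dot_off c c' : c != c' -> `|dot c c'| = 2.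
Proof.
case: c => [[p j]|e]; case: c' => [[q l]|e'] neq.
- rewrite dot_ll; have [pq|pq] := eqVneq p q.
    subst q; rewrite blk_same.
    have jl : (j == l) = false.
      by apply: contraNF neq => /eqP ->.
    rewrite jl /=.
    have -> : 2 * (0 * h%:R - 1) + 1 * 4 = 2 :> R by ring.
    by rewrite ger0_norm.
  have [ee He ->] := blk_diff j l pq.
  by rewrite mul0r addr0 normrM He mulr1 ger0_norm.
- by rewrite dot_lr normrM Xabs mulr1 ger0_norm.
- by rewrite dot_sym dot_lr normrM Xabs mulr1 ger0_norm.
- rewrite dot_rr.
  have -> : (e == e') = false by apply: contraNF neq => /eqP ->.
  by rewrite mul0r add0r normrM normrM !Xabs !mulr1 ger0_norm.
Qed.


Lemma sum_ind (A : {set P}) : \sum_x (x \in A)%:R = #|A|%:R :> R.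
Proof.
transitivity (\sum_(x in A) (1:R)); last by rewrite sumr_const.
by rewrite [RHS]big_mkcond; apply: eq_bigr => x _; case: (x \in A).
Qed.

Lemma rsum_sym t t' : rsum t t' = rsum t' t.
Proof. by apply: eq_bigr => c _; rewrite mulrC. Qed.

Lemma rsum_bb (B B' : BT) : rsum (inl B) (inl B') = (B == B')%:R * (h * 6)%:R.
Proof.
rewrite /rsum big_sumType /= sum_pair.
rewrite [X in _ + X]big1 ?addr0; last by move=> e _; rewrite mulr0.
transitivity (2 * \sum_p \sum_j F p (val B) j * F p (val B') j).
  rewrite big_distrr; apply: eq_bigr => p _; rewrite big_distrr; apply: eq_bigr => j _.
  by rewrite mulrACA s2E.
under eq_bigr => p _ do rewrite blk_row ?(valP B) ?(valP B') //.
have [<-|nBB] := eqVneq B B'.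
  have -> : (val B == val B) = true by apply/eqP.
  under eq_bigr => p _ do rewrite andbT.
  rewrite -big_distrl /= sum_ind Hsz3 ?(valP B) //.
  by rewrite natrM /=; ring.
rewrite big1 ?mulr0 ?mul0r // => p _.
have -> : (val B == val B') = false by apply: contraNF nBB => /eqP /val_inj ->.
by rewrite andbF mul0r.
Qed.

Lemma rsum_bq (B : BT) q : rsum (inl B) (inr (inl q)) = 0.
Proof.
rewrite /rsum big_sumType /= sum_pair.
rewrite [X in _ + X]big1 ?addr0; last by move=> e _; rewrite mul0r.
rewrite (sum_1pt (a := q)); last first.
  by move=> p pq; rewrite big1 // => j _; rewrite (negbTE pq) mulr0.
rewrite eqxx -big_distrl /= -big_distrr /= blk_rowsum.
by rewrite mulr0 mul0r.
Qed.

Lemma rsum_bi (B : BT) u : rsum (inl B) (inr (inr u)) = 0.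
Proof.
rewrite /rsum big_sumType /= sum_pair.
rewrite [X in _ + X]big1 ?addr0; last by move=> e _; rewrite mul0r.
by rewrite big1 // => p _; rewrite big1 // => j _; rewrite mulr0.
Qed.

Definition gpt (r : P + unit) (p : P) : R :=
  if r is inl q then (if p == q then 2 else 0) else 0.

Lemma rsum_rr r r' : rsum (inr r) (inr r') = (r == r')%:R * (h * 6)%:R.
Proof.
rewrite /rsum big_sumType /= sum_pair.
have -> : \sum_p \sum_j phi (inl (p, j)) (inr r) * phi (inl (p, j)) (inr r')
          = h%:R * \sum_p gpt r p * gpt r' p.
  rewrite big_distrr; apply: eq_bigr => p _.
  transitivity (\sum_(j < h) gpt r p * gpt r' p); last by rewrite sumr_const card_ord /= mulr_natl.
  by apply: eq_bigr => j _; case: r; case: r'.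
have -> : \sum_e phi (inr e) (inr r) * phi (inr e) (inr r') =
          wt r * wt r' * \sum_e X r e * X r' e.
  by rewrite big_distrr; apply: eq_bigr => e _ /=; ring.
rewrite Xrow.
case: r => [q|[]]; case: r' => [q'|[]].
- rewrite (sum_1pt (a := q)); last by move=> p pq; rewrite /gpt (negbTE pq) mul0r.
  rewrite /gpt /wt eqxx; have [<-|nq] := eqVneq q q'.
    by rewrite eqxx /= natrM -muln2 natrM; ring.
  have -> : (inl q == inl q' :> P + unit) = false by apply/negbTE; rewrite inj_eq //; exact: inl_inj.
  by rewrite /=; ring.
- rewrite big1; last by move=> p _; rewrite /gpt mulr0.
  by rewrite /=; ring.
- rewrite big1; last by move=> p _; rewrite /gpt mul0r.
  by rewrite /=; ring.
- rewrite big1 ?mulr0 ?add0r; last by move=> p _; rewrite mul0r.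
  rewrite /wt s3E eqxx /= natrM -muln2 natrM; ring.
Qed.

Lemma rsum_all t t' : rsum t t' = (t == t')%:R * (h * 6)%:R.
Proof.
case: t => [B|[q|[]]]; case: t' => [B'|[q'|[]]].
- by rewrite rsum_bb.
- by rewrite rsum_bq /= mul0r.
- by rewrite rsum_bi /= mul0r.
- by rewrite rsum_sym rsum_bq /= mul0r.
- by rewrite rsum_rr.
- by rewrite rsum_rr.
- by rewrite rsum_sym rsum_bi /= mul0r.
- by rewrite rsum_rr.
- by rewrite rsum_rr.
Qed.

End Frame.
Definition cardbij (A B : finType) (E : #|A| = #|B|) (a : A) : B :=
  enum_val (cast_ord E (enum_rank a)).

Lemma cardbij_bij (A B : finType) (E : #|A| = #|B|) : bijective (cardbij E).
Proof.
exists (cardbij (esym E)) => x; rewrite /cardbij enum_valK.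
  by rewrite cast_ordK enum_rankK.
by rewrite cast_ordKV enum_rankK.
Qed.

Lemma sum_bij (R : nmodType) (A B : finType) (f : A -> B) (G : B -> R) :
  bijective f -> \sum_a G (f a) = \sum_b G b.
Proof. by move=> fb; rewrite [RHS](reindex f) //; exact: onW_bij. Qed.

Lemma sum_pairG (R : nmodType) (A B : finType) (G : A * B -> R) :
  \sum_x G x = \sum_a \sum_b G (a, b).
Proof. by rewrite pair_big; apply: eq_bigr => -[]. Qed.

Section Had.
Variable R : realType.
Variable k : nat.
Local Notation h := k.+1.
Variable H : 'M[R]_h.
Hypothesis HH : is_hadamard H.

Lemma Hpm0 i j : H i j = 1 \/ H i j = -1.
Proof. by case: HH. Qed.

Lemma Hsq i j : H i j * H i j = 1.
Proof. by case: (Hpm0 i j) => ->; rewrite ?mulrNN mulr1. Qed.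

Lemma Hrow0 i i' : \sum_j H i j * H i' j = (i == i')%:R * h%:R.
Proof.
case: HH => _ /matrixP /(_ i i'); rewrite !mxE => E; rewrite mulr_natl -E.
by apply: eq_bigr => j _; rewrite mxE.
Qed.

Lemma HtH : H^T *m H = (h%:R : R)%:M.
Proof.
case: HH => _ E.
have h0 : (h%:R : R) != 0 by rewrite pnatr_eq0.
have : H *m ((h%:R)^-1 *: H^T) = 1%:M.
  by rewrite -scalemxAr E scale_scalar_mx mulVf.
move/mulmx1C => E2.
by rewrite -[H^T](scalerKV h0) -scalemxAl E2 scalemx1.
Qed.

Lemma Hcol0 j j' : \sum_i H i j * H i j' = (j == j')%:R * h%:R.
Proof.
have /matrixP /(_ j j') := HtH; rewrite !mxE => E; rewrite mulr_natl -E.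
by apply: eq_bigr => i _; rewrite mxE.
Qed.

Definition Hn (i j : 'I_h) : R := H i j * H ord0 j.

Lemma Hn_pm i j : Hn i j = 1 \/ Hn i j = -1.
Proof.
rewrite /Hn; case: (Hpm0 i j) => ->; case: (Hpm0 ord0 j) => ->;
  rewrite ?mulrNN ?mulr1 ?mulN1r ?mulrN1 ?opprK; by [left|right].
Qed.

Lemma Hn0 j : Hn ord0 j = 1.
Proof. exact: Hsq. Qed.

Lemma Hn_row i i' : \sum_j Hn i j * Hn i' j = (i == i')%:R * h%:R.
Proof.
rewrite -Hrow0; apply: eq_bigr => j _; rewrite /Hn.
by rewrite mulrACA Hsq mulr1.
Qed.

Lemma Hn_col j j' : \sum_i Hn i j * Hn i j' = (j == j')%:R * h%:R.
Proof.
rewrite /Hn.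
transitivity ((H ord0 j * H ord0 j') * \sum_i H i j * H i j').
  by rewrite big_distrr; apply: eq_bigr => i _ /=; ring.
rewrite Hcol0; have [<-|_] := eqVneq j j'; last by rewrite !mul0r mulr0.
by rewrite Hsq mul1r.
Qed.

Definition sgb (b : bool) : R := if b then -1 else 1.
Definition Y (s e : 'I_h * bool) : R := H s.1 e.1 * sgb (s.2 && e.2).

Lemma Y_pm s e : Y s e = 1 \/ Y s e = -1.
Proof.
rewrite /Y /sgb; case: (Hpm0 s.1 e.1) => ->; case: (_ && _);
  rewrite ?mulrNN ?mulr1 ?mulN1r ?mulrN1 ?opprK; by [left|right].
Qed.

Lemma sgb_sum a a' : \sum_(b : bool) sgb (a && b) * sgb (a' && b) = (a == a')%:R * 2.
Proof.
rewrite big_bool /=.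
by case: a; case: a'; rewrite /sgb /=; ring.
Qed.

Lemma Y_row s s' : \sum_e Y s e * Y s' e = (s == s')%:R * (h.*2)%:R.
Proof.
rewrite sum_pairG /Y /=.
transitivity (\sum_j H s.1 j * H s'.1 j * \sum_(b : bool) sgb (s.2 && b) * sgb (s'.2 && b)).
  apply: eq_bigr => j _; rewrite big_distrr; apply: eq_bigr => b _ /=; ring.
rewrite sgb_sum -big_distrl /= Hrow0.
case: s s' => [i a] [i' a'] /=; rewrite xpair_eqE -muln2 natrM.
by case: (i == i'); case: (a == a'); rewrite /= ?mul0r ?mulr0 ?mul1r ?mulr1.
Qed.

Lemma Y_col e e' : \sum_s Y s e * Y s e' = (e == e')%:R * (h.*2)%:R.
Proof.
rewrite sum_pairG /Y /=.
transitivity (\sum_i H i e.1 * H i e'.1 * \sum_(b : bool) sgb (e.2 && b) * sgb (e'.2 && b)).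
  apply: eq_bigr => j _; rewrite big_distrr; apply: eq_bigr => b _ /=.
  by rewrite (andbC b) (andbC b); ring.
rewrite sgb_sum -big_distrl /= Hcol0.
case: e e' => [i a] [i' a'] /=; rewrite xpair_eqE -muln2 natrM.
by case: (i == i'); case: (a == a'); rewrite /= ?mul0r ?mulr0 ?mul1r ?mulr1.
Qed.

End Had.
Unset Implicit Arguments.

Theorem corollary3p3 (R : realType) (h : nat) :
  (exists H : 'M[R]_h, is_hadamard H) ->
  (h %% 3 = 1 \/ h %% 3 = 2)%N ->
  exists phi : 'I_(h * (2 * h + 1)) -> 'cV[R]_(((h + 1) * (2 * h + 1)) %/ 3),
    is_ETF phi.
Proof.
move=> [H0 HH] Hh.
case: h H0 HH Hh => [|k] H0 HH Hh; first by case: Hh.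
have [P [bl [cardP [Hsz Hcov Hnb]]]] := sts_exists Hh.
have Hsz3 := sts_sz3 Hsz Hcov Hnb.
have Hc1 := sts_c1 Hsz Hcov Hnb.
have Hr : forall p, #|[set B in bl | p \in B]| = k.
  move=> p; apply: double_inj; rewrite (sts_r Hsz Hcov Hnb) cardP.
  by rewrite doubleS.
have nb := sts_nb Hsz Hcov Hnb.
pose Hn' := Hn H0.
have Eb : #|{: P + unit}| = #|{: 'I_k.+1 * bool}|.
  rewrite card_sum card_unit cardP card_prod card_ord card_bool doubleS /=.
  by rewrite -!muln2; lia.
pose beta := cardbij Eb.
have bb : bijective beta := cardbij_bij Eb.
pose X r e := Y H0 (beta r) e.
have Xpm : forall r e, X r e = 1 \/ X r e = -1 by move=> r e; exact: Y_pm.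
have Xrow : forall r r', \sum_e X r e * X r' e = (r == r')%:R * (k.+1.*2)%:R.
  by move=> r r'; rewrite /X Y_row // (inj_eq (bij_inj bb)).
have Xcol : forall e e', \sum_r X r e * X r e' = (e == e')%:R * (k.+1.*2)%:R.
  move=> e e'; rewrite /X (sum_bij (fun s => Y H0 s e * Y H0 s e') bb).
  exact: Y_col.
pose s2 : R := Num.sqrt 2.
pose s3 : R := Num.sqrt 3.
have s2E : s2 * s2 = 2 by rewrite -expr2 sqr_sqrtr // ler0n.
have s3E : s3 * s3 = 3 by rewrite -expr2 sqr_sqrtr // ler0n.
have Hpm := Hn_pm HH; have Hn0' := Hn0 HH; have Hrow := Hn_row HH; have Hcol := Hn_col HH.
pose ph := phi Hr Hn' X s2 s3.
set N := (k.+1 * (2 * k.+1 + 1))%N.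
set M := ((k.+1 + 1) * (2 * k.+1 + 1) %/ 3)%N.
have EC : #|{: 'I_N}| = #|{: Ct k P}|.
  rewrite card_ord card_sum !card_prod card_ord card_bool cardP /N doubleS /=.
  by rewrite -!muln2; nia.
have ET : #|{: 'I_M}| = #|{: Tt bl}|.
  rewrite card_ord card_sum card_sum card_unit card_sig /M.
  have -> : #|[pred x | x \in bl]| = #|bl| by apply: eq_card.
  have E3 : ((k.+1 + 1) * (2 * k.+1 + 1) = 3 * (#|bl| + (#|P| + 1)))%N.
    move: nb; rewrite cardP doubleS /= -!muln2; nia.
  by rewrite E3 mulKn.
pose cI := cardbij EC.
have cb : bijective cI := cardbij_bij EC.
pose rT := cardbij ET.
have rb : bijective rT := cardbij_bij ET.
pose vec (i : 'I_N) : 'cV[R]_M := \col_(m < M) ph (cI i) (rT m).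
have dotvE : forall i j, dotv (vec i) (vec j) = dot Hr Hn' X s2 s3 (cI i) (cI j).
  move=> i j; rewrite /dotv !mxE /dot.
  rewrite -(sum_bij (fun t => phi Hr Hn' X s2 s3 (cI i) t * phi Hr Hn' X s2 s3 (cI j) t) rb).
  by apply: eq_bigr => m _; rewrite !mxE.
have Dd := dot_diag Hr Hn0' Hcol Xpm Xcol s2E s3E.
have Do := dot_off Hc1 Hr Hpm Hn0' Hcol Xpm Xcol s2E s3E.
have Ra := rsum_all Hsz3 Hr Hn0' Hrow Xrow s2E s3E.
exists vec; split.
- move=> i; apply/eqP => E0; have := dotvE i i; rewrite E0 Dd.
  rewrite /dotv trmx0 mul0mx mxE => /eqP; rewrite eq_sym pnatr_eq0.
  by rewrite addn2.
- by move=> i j; rewrite !dotvE !Dd.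
- move=> i j a b ij ab; rewrite !dotvE !Do //.
    by rewrite (inj_eq (bij_inj cb)).
  by rewrite (inj_eq (bij_inj cb)).
- exists (k.+1 * 6)%:R; apply/matrixP => a b; rewrite summxE mxE.
  transitivity (rsum Hr Hn' X s2 s3 (rT a) (rT b)); last first.
    by rewrite Ra (inj_eq (bij_inj rb)) mulr_natl.
  rewrite /rsum -(sum_bij (fun c => phi Hr Hn' X s2 s3 c (rT a) * phi Hr Hn' X s2 s3 c (rT b)) cb).
  by apply: eq_bigr => i _; rewrite !mxE big_ord1 !mxE.
Qed.
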